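(* Let $n\ge1$, $d\ge0$ be integers and let $A=(\mathbf{a}_0,\dots,\mathbf{a}_N)$ be $N+1=N(n,d)$ distinct points of $\mathbb{R}^n$. Then: (1) For each fixed $p\in\{1,\dots,n\}$, $\operatorname{Det}V(A)$, viewed as a polynomial in the coordinates of $\mathbf{a}_0,\dots,\mathbf{a}_N$, is homogeneous of degree $N(n+1,d-1)$ with respect to the $p$-th coordinates of the points $\mathbf{a}_0,\dots,\mathbf{a}_N$. (2) If $\varphi:\mathbb{R}^n\to\mathbb{R}^n$ is a linear transformation with matrix $P$, then $\operatorname{Det}V(\varphi(A))=(\operatorname{Det}P)^{N(n+1,d-1)}\operatorname{Det}V(A)$, where $\varphi(A)=(\varphi(\mathbf{a}_0),\dots,\varphi(\mathbf{a}_N))$. (3) For every $\mathbf{v}\in\mathbb{R}^n$, $\operatorname{Det}V(A-\mathbf{v})=\operatorname{Det}V(A)$, where $A-\mathbf{v}=(\mathbf{a}_0-\mathbf{v},\dots,\mathbf{a}_N-\mathbf{v})$.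
   Context: $N(a,b):=\binom{a+b}{b}$, with $N(a,-1):=0$. $I(n,d)$ is the set of multi-indices $\mathbf{j}\in\mathbb{Z}_{\ge0}^n$ with $|\mathbf{j}|\le d$, and $\mathbf{x}^{\mathbf{j}}=x_1^{j_1}\cdots x_n^{j_n}$. With a fixed ordering $\mathbf{j}_0,\dots,\mathbf{j}_N$ of $I(n,d)$, the ($n$-dimensional) Vandermonde matrix of an ordered tuple $A=(\mathbf{a}_0,\dots,\mathbf{a}_N)$ is $V(A)=(\mathbf{a}_i^{\mathbf{j}_l})_{0\le i,l\le N}$ (rows indexed by points, columns by exponents). *)

(* Defs.v *)
From HB Require Import structures.
From mathcomp Require Import all_boot all_order all_algebra.
From mathcomp Require Import reals.
From mathcomp Require Import mpoly.
Set Implicit Arguments. Unset Strict Implicit. Unset Printing Implicit Defensive.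
Import Order.TTheory GRing.Theory Num.Theory.
Local Open Scope ring_scope.

Definition Nbin (a b : nat) : nat := 'C(a + b, b).

(* N(a, d-1), with the convention N(a,-1) = 0 *)
Definition Nbin_pred (a d : nat) : nat :=
  match d with 0 => 0 | d'.+1 => Nbin a d' end.

Definition mdegree (n : nat) (j : {ffun 'I_n -> nat}) : nat := \sum_(k < n) j k.

(* e : 'I_(N(n,d)) -> Z_{>=0}^n is an ordering j_0,...,j_N of I(n,d):
   a bijection onto the multi-indices of degree <= d. *)
Definition is_ordering (n d : nat) (e : 'I_(Nbin n d) -> {ffun 'I_n -> nat}) :=
  [/\ injective e,
      (forall l, (mdegree (e l) <= d)%N) &
      (forall j : {ffun 'I_n -> nat}, (mdegree j <= d)%N -> exists l, e l = j)].

Definition mono (R : comNzRingType) (n : nat) (x : 'rV[R]_n) (j : {ffun 'I_n -> nat}) : R :=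
  \prod_(k < n) x ord0 k ^+ j k.

(* Vandermonde matrix V(A) = (a_i^{j_l})_{i,l}, rows = points, columns = exponents *)
Definition Vdm (R : comNzRingType) (n d : nat) (e : 'I_(Nbin n d) -> {ffun 'I_n -> nat})
  (A : 'I_(Nbin n d) -> 'rV[R]_n) : 'M[R]_(Nbin n d) :=
  \matrix_(i, l) mono (A i) (e l).

(* The generic Vandermonde matrix: its entries are polynomials in the
   N(n,d)*n indeterminates X_{(i,k)} = k-th coordinate of the i-th point. *)
Definition Vdm_gen (R : comNzRingType) (n d : nat) (e : 'I_(Nbin n d) -> {ffun 'I_n -> nat})
  : 'M[{mpoly R[Nbin n d * n]}]_(Nbin n d) :=
  \matrix_(i, l) \prod_(k < n) 'X_(mxvec_index i k) ^+ e l k.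

Definition homog_in_coord (R : comNzRingType) (N n : nat) (p : 'I_n) (D : nat)
  (P : {mpoly R[N * n]}) : Prop :=
  forall m, m \in msupp P -> (\sum_(i < N) m (mxvec_index i p))%N = D.

Definition coords (R : comNzRingType) (N n : nat) (A : 'I_N -> 'rV[R]_n) : 'I_(N * n) -> R :=
  fun v => mxvec (\matrix_(i, k) A i ord0 k) ord0 v.

(* Main.v *)
Require Import Defs.
From HB Require Import structures.
From mathcomp Require Import all_boot all_order all_algebra.
From mathcomp Require Import reals.
From mathcomp Require Import mpoly.
From mathcomp Require Import fingroup perm.
From mathcomp Require Import zify.
From mathcomp Require Import ring.
Set Implicit Arguments. Unset Strict Implicit. Unset Printing Implicit Defensive.
Import Order.TTheory GRing.Theory Num.Theory.
Import Order.TTheory GRing.Theory Num.Theory.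
Lemma mdeg_ge1 n (j : {ffun 'I_n -> nat}) p : (j p <= mdegree j)%N.
Proof. by rewrite /mdegree (bigD1 p) //= leq_addr. Qed.

Lemma mdeg_ge2 n (j : {ffun 'I_n -> nat}) p k : k != p -> (j k + j p <= mdegree j)%N.
Proof.
move=> kp; rewrite /mdegree (bigD1 p) //= (bigD1 k) //=; lia.
Qed.

Lemma sum_lt_min k m : (\sum_(s < k) (s < m))%N = minn k m.
Proof.
elim: k => [|k IH]; first by rewrite big_ord0 min0n.
rewrite big_ord_recr /= IH; case: (ltnP k m) => h /=; lia.
Qed.

Lemma sum_lt_min' k m : (m <= k)%N -> (\sum_(s < k) (if (s < m)%N then 1 else 0))%N = m.
Proof.
move=> mk; rewrite -[RHS](minn_idPr mk) -sum_lt_min; apply: eq_bigr => s _.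
by case: ifP.
Qed.

Lemma sum_e_p n d (e : 'I_(Nbin n d) -> {ffun 'I_n -> nat})
  (He : is_ordering e) (p : 'I_n) : (\sum_l e l p)%N = Nbin_pred n.+1 d.
Proof.
case: He => einj edeg esurj.
case: d e einj edeg esurj => [|d'] e einj edeg esurj /=.
  by rewrite big1 // => l _; apply/eqP; rewrite -leqn0 (leq_trans (mdeg_ge1 _ p)).
pose N := Nbin n d'.+1.
pose S := [set x : 'I_N * 'I_d'.+1 | (x.2 < e x.1 p)%N].
have HS : (\sum_l e l p)%N = #|S|.
  rewrite -sum1dep_card -(pair_big_dep xpredT (fun l (s : 'I_d'.+1) => (s < e l p)%N) (fun _ _ => 1%N)) /=.
  apply: eq_bigr => l _; rewrite big_mkcond /= sum_lt_min' //.
  have := edeg l; have := mdeg_ge1 (e l) p; lia.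
pose phi (x : 'I_N * 'I_d'.+1) : n.+1.-tuple 'I_d'.+1 :=
  [tuple of inord (e x.1 p - x.2.+1) ::
     [tuple (if k == p then x.2 else inord (e x.1 k)) | k < n]].
pose T := [set t : n.+1.-tuple 'I_d'.+1 | (\sum_(i <- t) i <= d')%N].
have B1 x : x \in S -> (e x.1 p - x.2.+1 < d'.+1)%N.
  rewrite inE => h; have := edeg x.1; have := mdeg_ge1 (e x.1) p; lia.
have B2 x k : x \in S -> k != p -> (e x.1 k < d'.+1)%N.
  rewrite inE => h kp; have H2 := edeg x.1; have H1 := mdeg_ge2 (e x.1) kp.
  have H3 : (0 < e x.1 p)%N by apply: leq_ltn_trans h.
  apply: (@leq_trans (e x.1 k + e x.1 p)); first by rewrite -addn1 leq_add2l.
  exact: leq_trans H1 H2.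
have V0 x : x \in S -> nat_of_ord (tnth (phi x) ord0) = (e x.1 p - x.2.+1)%N.
  by move=> h; rewrite tnth0 inordK // B1.
have VS x k : x \in S -> nat_of_ord (tnth (phi x) (lift ord0 k)) = if k == p then nat_of_ord x.2 else e x.1 k.
  move=> h; rewrite tnthS tnth_mktuple; case: ifP => // /negbT kp.
  by rewrite inordK // B2.
have Hinj : {in S &, injective phi}.
  move=> [l s] [l' s'] hx hy E.
  have h0 := congr1 (fun t => nat_of_ord (tnth t ord0)) E; rewrite /= V0 // V0 // in h0.
  have hk k := congr1 (fun t => nat_of_ord (tnth t (lift ord0 k))) E.
  have ss' : s = s' by apply: val_inj; move: (hk p); rewrite /= VS // VS // eqxx.
  subst s'; congr (_, _); apply: einj; apply/ffunP => k.
  case: (eqVneq k p) => [->|kp].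
    move: hx hy h0; rewrite !inE /= => hx hy h0; lia.
  by move: (hk k); rewrite /= VS // VS // (negPf kp).
rewrite HS; have -> : #|S| = #|T|.
  rewrite -(card_in_imset Hinj); congr #|pred_of_set _|; apply/setP => t.
  apply/imsetP/idP => [[x hx ->]|].
    rewrite inE big_cons big_tuple.
    rewrite (eq_bigr (fun k => if k == p then nat_of_ord x.2 else e x.1 k)); last first.
      by move=> k _; rewrite -(VS x k hx) tnthS.
    rewrite (bigD1 p) //= eqxx (eq_bigr (fun k => e x.1 k)); last first.
      by move=> k /negPf ->.
    have := edeg x.1; rewrite /mdegree (bigD1 p) //= V0 //.
    move: hx; rewrite inE => hx. move: (e x.1 p) (nat_of_ord x.2) hx => a b hx. move: (\sum_(i < n | i != p) e x.1 i) => r. lia.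
  case/tupleP: t => x t'; rewrite inE big_cons big_tuple => Ht.
  pose j := [ffun k => if k == p then (nat_of_ord (tnth t' p) + x + 1)%N else nat_of_ord (tnth t' k)].
  have [l El] : exists l, e l = j.
    apply: esurj; rewrite /mdegree (bigD1 p) //= ffunE eqxx.
    rewrite (eq_bigr (fun k => nat_of_ord (tnth t' k))); last first.
      by move=> k /negPf kp; rewrite ffunE kp.
    move: Ht; rewrite (bigD1 p) //=; lia.
  have hS : (l, tnth t' p) \in S by rewrite inE /= El ffunE eqxx addn1 ltnS leq_addr.
  exists (l, tnth t' p) => //.
  apply: eq_from_tnth => i; case: (unliftP ord0 i) => [k ->|->].
    apply: val_inj => /=; rewrite VS // tnthS.
    by case: (eqVneq k p) => [-> //|kp] /=; rewrite El ffunE (negPf kp).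
  apply: val_inj => /=; rewrite tnth0 V0 // /= El ffunE eqxx.
  move: (nat_of_ord (tnth t' p)) (nat_of_ord x) => a b; lia.
rewrite card_partial_ord_partitions /Nbin.
by rewrite -bin_sub ?leq_addr // addKn.
Qed.

Local Open Scope ring_scope.

Definition lowerm n (rho : 'X_{1..n} -> nat) (j m : 'X_{1..n}) :=
  (mdeg m <= mdeg j)%N && (rho m < rho j)%N.

Definition good (R : comNzRingType) n (rho : 'X_{1..n} -> nat)
  (Q : {mpoly R[n]}) (j : 'X_{1..n}) (c : R) :=
  exists L : {mpoly R[n]}, Q = c *: 'X_[j] + L /\
     forall m, m \in msupp L -> lowerm rho j m.

Definition addit n (rho : 'X_{1..n} -> nat) :=
  forall m1 m2, rho (m1 + m2)%MM = (rho m1 + rho m2)%N.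

Lemma good_mul (R : comNzRingType) n rho (Q1 Q2 : {mpoly R[n]}) j1 j2 c1 c2 :
  addit rho -> good rho Q1 j1 c1 -> good rho Q2 j2 c2 ->
  good rho (Q1 * Q2) (j1 + j2)%MM (c1 * c2).
Proof.
move=> Ha [L1 [-> H1]] [L2 [-> H2]].
exists (c1 *: ('X_[j1] * L2) + c2 *: (L1 * 'X_[j2]) + L1 * L2); split.
  rewrite mulrDl !mulrDr -!scalerAl -!scalerAr scalerA mpolyXD.
  by rewrite mulrC !addrA.
move=> m /msuppD_le; rewrite mem_cat => /orP [/msuppD_le|].
  rewrite mem_cat => /orP [] /msuppZ_le /msuppM_le /allpairsP [[m1 m2] /= [h1 h2 ->]].
    move: h1; rewrite msuppX inE => /eqP ->.
    move: (H2 _ h2); rewrite /lowerm !mdegD !Ha => /andP [a b].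
    apply/andP; split; lia.
  move: h2; rewrite msuppX inE => /eqP ->.
  move: (H1 _ h1); rewrite /lowerm !mdegD !Ha => /andP [a b].
  apply/andP; split; lia.
move=> /msuppM_le /allpairsP [[m1 m2] /= [h1 h2 ->]].
move: (H1 _ h1) (H2 _ h2); rewrite /lowerm !mdegD !Ha => /andP [a b] /andP [a' b'].
apply/andP; split; lia.
Qed.

Lemma good1 (R : comNzRingType) n rho : addit rho -> good rho (1 : {mpoly R[n]}) 0%MM 1.
Proof.
move=> _; exists 0; split; first by rewrite addr0 scale1r mpolyX0.
by move=> m; rewrite msupp0.
Qed.

Lemma good_exp (R : comNzRingType) n rho (Q : {mpoly R[n]}) j c k :
  addit rho -> good rho Q j c -> good rho (Q ^+ k) (j *+ k)%MM (c ^+ k).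
Proof.
move=> Ha Hg; elim: k => [|k IH]; first by rewrite !expr0 mulm0n; exact: good1.
by rewrite !exprS mulmS; apply: good_mul.
Qed.

Lemma good_coef (R : comNzRingType) n rho (Q : {mpoly R[n]}) j c :
  good rho Q j c -> Q@_j = c.
Proof.
move=> [L [-> H]]; rewrite mcoeffD mcoeffZ mcoeffX eqxx mulr1.
case: (boolP (j \in msupp L)) => [/H|]; first by rewrite /lowerm ltnn andbF.
by rewrite -mcoeff_eq0 => /eqP ->; rewrite addr0.
Qed.

Lemma good_supp (R : comNzRingType) n rho (Q : {mpoly R[n]}) j c m :
  good rho Q j c -> m \in msupp Q -> m != j -> lowerm rho j m.
Proof.
move=> [L [-> H]] /msuppD_le; rewrite mem_cat => /orP [/msuppZ_le|/H //].
by rewrite msuppX inE => ->.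
Qed.

Lemma good_deg (R : comNzRingType) n rho (Q : {mpoly R[n]}) j c m :
  good rho Q j c -> m \in msupp Q -> (mdeg m <= mdeg j)%N.
Proof.
move=> Hg Hm; case: (eqVneq m j) => [->//|ne].
by case/andP: (good_supp Hg Hm ne).
Qed.

Lemma good_prod (R : comNzRingType) n rho (I : finType) (F : I -> {mpoly R[n]})
  (J : I -> 'X_{1..n}) (C : I -> R) :
  addit rho -> (forall i, good rho (F i) (J i) (C i)) ->
  good rho (\prod_i F i) (\sum_i J i)%MM (\prod_i C i).
Proof.
move=> Ha H; apply: (@big_ind3 _ _ _ (fun a b c => good rho a b c)).
- exact: good1.
- by move=> x1 x2 x3 y1 y2 y3 h1 h2; apply: good_mul.
- by move=> i _; apply: H.
Qed.

Definition mn n (j : {ffun 'I_n -> nat}) : 'X_{1..n} := [multinom j i | i < n].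
Definition xv (R : Type) n (x : 'rV[R]_n) : 'I_n -> R := fun k => x ord0 k.

Lemma mn_inj n : injective (@mn n).
Proof.
by move=> j1 j2 /mnmP H; apply/ffunP => i; move: (H i); rewrite !mnmE.
Qed.

Lemma mdeg_mn n (j : {ffun 'I_n -> nat}) : mdeg (mn j) = mdegree j.
Proof. by rewrite mdegE /mdegree; apply: eq_bigr => i _; rewrite mnmE. Qed.

Lemma mono_meval (R : comNzRingType) n (x : 'rV[R]_n) j :
  mono x j = ('X_[mn j] : {mpoly R[n]}).@[xv x].
Proof. by rewrite mevalX /mono; apply: eq_bigr => i _; rewrite mnmE. Qed.

Lemma big_supp_eq (R : comNzRingType) (T : eqType) (s1 s2 : seq T) (G : T -> R) :
  uniq s1 -> uniq s2 -> {subset s1 <= s2} -> (forall m, m \notin s1 -> G m = 0) ->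
  \sum_(m <- s1) G m = \sum_(m <- s2) G m.
Proof.
move=> u1 u2 sub H0.
rewrite [RHS](bigID (fun m => m \in s1)) /= [X in _ + X]big1 ?addr0; last first.
  by move=> m /H0.
rewrite -[RHS]big_filter. apply: perm_big; apply: uniq_perm => //.
  exact: filter_uniq.
by move=> m; rewrite mem_filter; case: (boolP (m \in s1)) => // /sub ->.
Qed.

Lemma expand (R : comNzRingType) n d (e : 'I_(Nbin n d) -> {ffun 'I_n -> nat})
  (He : is_ordering e) (Q : {mpoly R[n]}) x :
  (forall m, m \in msupp Q -> (mdeg m <= d)%N) ->
  Q.@[xv x] = \sum_l Q@_(mn (e l)) * mono x (e l).
Proof.
case: He => einj edeg esurj Hd.
rewrite mevalE.
have -> : \sum_l Q@_(mn (e l)) * mono x (e l) =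
   \sum_(m <- [seq mn (e l) | l in 'I_(Nbin n d)]) Q@_m * \prod_i xv x i ^+ m i.
  rewrite big_image; apply: eq_bigr => l _; congr (_ * _).
  by rewrite mono_meval mevalX.
apply: big_supp_eq.
- exact: msupp_uniq.
- rewrite map_inj_uniq ?enum_uniq //.
  by move=> a b /mn_inj /einj.
- move=> m Hm; have := Hd _ Hm => Hmd.
  have [l El] : exists l, e l = [ffun i => m i].
    apply: esurj; rewrite /mdegree (eq_bigr (fun i => m i)) -?mdegE //.
    by move=> i _; rewrite ffunE.
  apply/mapP; exists l; first by rewrite mem_enum.
  by rewrite El; apply/mnmP => i; rewrite mnmE ffunE.
- by move=> m; rewrite -mcoeff_eq0 => /eqP ->; rewrite mul0r.
Qed.
Lemma det_rank_trig (R : comNzRingType) N (M : 'M[R]_N) (rk : 'I_N -> nat) :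
  (forall i j, i != j -> M i j != 0 -> (rk j < rk i)%N) ->
  \det M = \prod_i M i i.
Proof.
move=> Hrk; rewrite /determinant (bigD1 (1%g : 'S_N)) //=.
rewrite [X in _ + X]big1 => [|s /eqP s1].
  by rewrite addr0 odd_perm1 expr0 mul1r; apply: eq_bigr => i _; rewrite perm1.
case: (boolP [forall i, M i (s i) != 0]) => [/forallP Hall|]; last first.
  rewrite negb_forall => /existsP [i /negPn /eqP Hi].
  by rewrite (bigD1 i) //= Hi mul0r mulr0.
exfalso; apply: s1.
have le i : (rk (s i) <= rk i)%N.
  case: (eqVneq i (s i)) => [<-//|ne]; exact/ltnW/Hrk.
have Hsum : (\sum_i rk (s i) = \sum_i rk i)%N.
  by rewrite [RHS](reindex_inj (@perm_inj _ s)).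
have : (\sum_i (rk i - rk (s i)) == 0)%N.
  have E : (\sum_i rk (s i) + \sum_i (rk i - rk (s i)) = \sum_i rk i)%N.
    by rewrite -big_split /=; apply: eq_bigr => i _; rewrite subnKC.
  by move: E; rewrite Hsum -{2}[(\sum_i rk i)%N]addn0 => /addnI ->.
rewrite sum_nat_eq0 => /forallP H0; apply/permP => i; rewrite perm1.
apply/eqP; apply/negPn/negP => ne.
have ne' : i != s i by rewrite eq_sym.
have := Hrk i (s i) ne' (Hall i).
move: (H0 i) => /=; rewrite subn_eq0 => h1 h2.
by move: (leq_trans h2 h1); rewrite ltnn.
Qed.

Lemma engine (R : comNzRingType) n d (e : 'I_(Nbin n d) -> {ffun 'I_n -> nat})
  (He : is_ordering e) (f : 'rV[R]_n -> 'rV[R]_n)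
  (Q : 'I_(Nbin n d) -> {mpoly R[n]}) rho (c : 'I_(Nbin n d) -> R) :
  (forall l, good rho (Q l) (mn (e l)) (c l)) ->
  (forall x l, mono (f x) (e l) = (Q l).@[xv x]) ->
  forall A, \det (Vdm e (fun i => f (A i))) = (\prod_l c l) * \det (Vdm e A).
Proof.
move=> Hg Hf A.
pose M := \matrix_(l, l') (Q l)@_(mn (e l')) : 'M[R]_(Nbin n d).
have -> : Vdm e (fun i => f (A i)) = Vdm e A *m M^T.
  apply/matrixP => i l; rewrite !mxE Hf (expand He); last first.
    move=> m Hm; case: He => _ edeg _.
    by rewrite (leq_trans (good_deg (Hg l) Hm)) // mdeg_mn.
  by apply: eq_bigr => l' _; rewrite !mxE mulrC.
rewrite det_mulmx det_tr mulrC; congr (_ * _).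
rewrite (@det_rank_trig _ _ M (fun l => rho (mn (e l)))).
  by apply: eq_bigr => l _; rewrite mxE (good_coef (Hg l)).
move=> l l' ne; rewrite mxE -mcoeff_msupp => Hm.
case: He => einj _ _.
have ne' : mn (e l') != mn (e l).
  by apply/negP => /eqP /mn_inj /einj E; move: ne; rewrite E eqxx.
by case/andP: (good_supp (Hg l) Hm ne').
Qed.

Lemma sumU_mn n (j : {ffun 'I_n -> nat}) :
  (\sum_k (U_(k) *+ j k))%MM = mn j.
Proof.
apply/mnmP => i; rewrite mnm_sumE mnmE (bigD1 i) //= mulmnE mnm1E eqxx mul1n.
rewrite big1 ?addn0 // => k /negPf ne; rewrite mulmnE mnm1E.
by rewrite eq_sym in ne; rewrite eq_sym ne mul0n.
Qed.

Lemma engine2 (R : comNzRingType) n d (e : 'I_(Nbin n d) -> {ffun 'I_n -> nat})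
  (He : is_ordering e) (f : 'rV[R]_n -> 'rV[R]_n)
  (F : 'I_n -> {mpoly R[n]}) rho (C : 'I_n -> R) :
  addit rho ->
  (forall k, good rho (F k) U_(k)%MM (C k)) ->
  (forall x k, f x ord0 k = (F k).@[xv x]) ->
  forall A, \det (Vdm e (fun i => f (A i))) =
     (\prod_l \prod_k C k ^+ e l k) * \det (Vdm e A).
Proof.
move=> Ha Hg Hf A.
apply: (engine He (Q := fun l => \prod_k F k ^+ e l k) (rho := rho)).
  move=> l; rewrite -sumU_mn; apply: good_prod => // k.
  exact: good_exp.
move=> x l; rewrite /mono rmorph_prod; apply: eq_bigr => k _.
by rewrite rmorphXn /= Hf.
Qed.

Lemma part3 (R : comNzRingType) n d (e : 'I_(Nbin n d) -> {ffun 'I_n -> nat})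
  (He : is_ordering e) (A : 'I_(Nbin n d) -> 'rV[R]_n) (v : 'rV[R]_n) :
  \det (Vdm e (fun i => A i - v)) = \det (Vdm e A).
Proof.
rewrite (@engine2 R n d e He (fun x => x - v) (fun k => 'X_k - (v ord0 k)%:MP)
   (@mdeg n) (fun _ => 1)).
- by rewrite big1 ?mul1r // => l _; rewrite big1 // => k _; rewrite expr1n.
- by move=> m1 m2; rewrite mdegD.
- move=> k; exists (- (v ord0 k)%:MP); split; first by rewrite scale1r.
  move=> m; rewrite (perm_mem (msuppN _)).
  rewrite msuppC; case: ifP => //= _; rewrite inE => /eqP ->.
    by rewrite /lowerm mdeg0 mdeg1.
- by move=> x k; rewrite mevalB mevalXU mevalC !mxE.
Qed.

Definition trans_by (R : comNzRingType) n (P : 'M[R]_n) (x : 'rV[R]_n) : 'rV[R]_n :=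
  (P *m x^T)^T.

Lemma part2_tri (R : comNzRingType) n d (e : 'I_(Nbin n d) -> {ffun 'I_n -> nat})
  (He : is_ordering e) K (HK : forall k, (\sum_l e l k)%N = K)
  (P : 'M[R]_n) (w : 'I_n -> nat) :
  (forall k k', k != k' -> P k k' != 0 -> (w k' < w k)%N) ->
  forall A, \det (Vdm e (fun i => trans_by P (A i))) = \det P ^+ K * \det (Vdm e A).
Proof.
move=> Hw A.
rewrite (@engine2 R n d e He (trans_by P) (fun k => \sum_k' P k k' *: 'X_k')
   (fun m => \sum_k m k * w k)%N (fun k => P k k)).
- congr (_ * _); rewrite exchange_big /= (@det_rank_trig _ _ P w) // -prodrXl.
  by apply: eq_bigr => k _; rewrite prodrXr HK.
- by move=> m1 m2; rewrite -big_split /=; apply: eq_bigr => i _; rewrite mnmDE mulnDl.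
- move=> k; exists (\sum_(k' | k' != k) P k k' *: 'X_k'); split.
    by rewrite (bigD1 k).
  move=> m /msupp_sum_le /flattenP [s /mapP [k' Hk' ->] Hm].
  move: Hk'; rewrite mem_filter => /andP [ne _].
  case: (eqVneq (P k k') 0) => [E|nz].
    by move: Hm; rewrite E scale0r msupp0.
  move: Hm => /msuppZ_le; rewrite msuppX inE => /eqP ->.
  rewrite /lowerm !mdeg1 leqnn /=.
  have rU (a : 'I_n) : (\sum_i U_(a)%MM i * w i = w a)%N.
    rewrite (bigD1 a) //= mnm1E eqxx mul1n big1 ?addn0 // => i ne'.
    by rewrite mnm1E eq_sym (negPf ne') mul0n.
  by rewrite !rU; apply: Hw; rewrite // eq_sym.
- move=> x k; rewrite /trans_by !mxE raddf_sum /=; apply: eq_bigr => k' _.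
  by rewrite mevalZ mevalXU !mxE.
Qed.
Lemma tperm_decomp (R : comNzRingType) n (i j : 'I_n) : i != j ->
  tperm_mx i j = (1%:M + delta_mx j i) *m (1%:M - delta_mx i j) *m
     (1%:M + delta_mx j i) *m (1%:M - delta_mx j j - delta_mx j j) :> 'M[R]_n.
Proof.
move=> ne.
rewrite !(mulmxDl, mulmxDr, mulmxBl, mulmxBr, mul1mx, mulmx1, mulmxN, mulNmx, opprK).
rewrite -!mulmxA !mul_delta_mx_cond ?(mulmxnE, mulmxN, mulNmx, opprK, mul_delta_mx_cond).
have nej : j != i by rewrite eq_sym.
rewrite !(eqxx, negPf ne, negPf nej, mulr0n, mulr1n, mulmx0, mul0mx, mul_delta_mx_cond, oppr0, addr0, add0r, mulmxN, mulNmx).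
apply/matrixP => a b.
rewrite !mxE.
case: tpermP => [Ea|Ea|/eqP ai /eqP aj]; case: (eqVneq b i) => [Eb|bi]; case: (eqVneq b j) => [Eb'|bj];
  try (by move: ne; rewrite -Eb -Eb' eqxx);
  rewrite ?Ea ?Eb ?Eb' ?eqxx ?(negPf ne) ?(negPf nej) ?(negPf ai) ?(negPf aj) ?(negPf bi) ?(negPf bj) /=.
all: rewrite ?(eq_sym a) ?(negPf ai) ?(negPf aj) ?(eq_sym b) ?(eq_sym i) ?(eq_sym j) ?(negPf bi) ?(negPf bj) /=.
all: try ring.
Qed.

Definition goodP (R : comNzRingType) n d (e : 'I_(Nbin n d) -> {ffun 'I_n -> nat}) K
  (P : 'M[R]_n) :=
  forall A, \det (Vdm e (fun i => trans_by P (A i))) = \det P ^+ K * \det (Vdm e A).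

Lemma goodP_mul (R : comNzRingType) n d (e : 'I_(Nbin n d) -> {ffun 'I_n -> nat}) K (P Q : 'M[R]_n) :
  goodP e K P -> goodP e K Q -> goodP e K (P *m Q).
Proof.
move=> HP HQ A.
have E i : trans_by (P *m Q) (A i) = trans_by P (trans_by Q (A i)).
  by rewrite /trans_by trmxK mulmxA.
have -> : Vdm e (fun i => trans_by (P *m Q) (A i)) = Vdm e (fun i => trans_by P (trans_by Q (A i))).
  by apply/matrixP => a b; rewrite !mxE E.
by rewrite HP HQ det_mulmx exprMn mulrA.
Qed.

Lemma goodP_tri (R : comNzRingType) n d (e : 'I_(Nbin n d) -> {ffun 'I_n -> nat})
  (He : is_ordering e) K (HK : forall k, (\sum_l e l k)%N = K)
  (P : 'M[R]_n) (w : 'I_n -> nat) :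
  (forall k k', k != k' -> P k k' != 0 -> (w k' < w k)%N) -> goodP e K P.
Proof. move=> Hw A; exact: (part2_tri He HK Hw). Qed.

Lemma goodP_tperm (R : comNzRingType) n d (e : 'I_(Nbin n d) -> {ffun 'I_n -> nat})
  (He : is_ordering e) K (HK : forall k, (\sum_l e l k)%N = K) (i j : 'I_n) :
  goodP e K (tperm_mx i j : 'M[R]_n).
Proof.
case: (eqVneq i j) => [<-|ne].
  rewrite /tperm_mx tperm1 perm_mx1.
  apply: (goodP_tri He HK (w := fun _ => 0%N)) => k k' ne'.
  by rewrite mxE (negPf ne') eqxx.
rewrite (tperm_decomp R ne).
have nej : j != i by rewrite eq_sym.
apply: goodP_mul; [apply: goodP_mul; [apply: goodP_mul|]|].
- apply: (goodP_tri He HK (w := fun k => nat_of_bool (k == j))) => a b ab.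
  rewrite !mxE (negPf ab) add0r.
  case: (eqVneq a j) => [Ea|aj]; case: (eqVneq b i) => [Eb|bi];
  rewrite ?Ea ?Eb ?eqxx ?(negPf nej) ?(negPf ne) ?(negPf aj) ?(negPf bi) ?andbF ?oppr0 //=; try by rewrite eqxx.
- apply: (goodP_tri He HK (w := fun k => nat_of_bool (k == i))) => a b ab.
  rewrite !mxE (negPf ab) add0r.
  case: (eqVneq a i) => [Ea|aj]; case: (eqVneq b j) => [Eb|bi];
  rewrite ?Ea ?Eb ?eqxx ?(negPf nej) ?(negPf ne) ?(negPf aj) ?(negPf bi) ?andbF ?oppr0 //=; try by rewrite eqxx.
- apply: (goodP_tri He HK (w := fun k => nat_of_bool (k == j))) => a b ab.
  rewrite !mxE (negPf ab) add0r.
  case: (eqVneq a j) => [Ea|aj]; case: (eqVneq b i) => [Eb|bi];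
  rewrite ?Ea ?Eb ?eqxx ?(negPf nej) ?(negPf ne) ?(negPf aj) ?(negPf bi) ?andbF ?oppr0 //=; try by rewrite eqxx.
- apply: (goodP_tri He HK (w := fun _ => 0%N)) => a b ab.
  rewrite !mxE (negPf ab) /=.
  case: (eqVneq a j) => [Ea|aj]; case: (eqVneq b j) => [Eb|bi];
  rewrite ?Ea ?Eb ?eqxx ?(negPf nej) ?(negPf ne) ?(negPf aj) ?(negPf bi) ?andbF ?oppr0 ?subr0 //=; try by rewrite eqxx.
  all: rewrite ?addr0 ?eqxx //. by move: ab; rewrite Ea Eb eqxx.
Qed.

Lemma goodP_1 (R : comNzRingType) n d (e : 'I_(Nbin n d) -> {ffun 'I_n -> nat})
  (He : is_ordering e) K (HK : forall k, (\sum_l e l k)%N = K) :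
  goodP e K (1%:M : 'M[R]_n).
Proof.
apply: (goodP_tri He HK (w := fun _ => 0%N)) => k k' ne'.
by rewrite mxE (negPf ne') eqxx.
Qed.

Lemma goodP_perm (R : comNzRingType) n d (e : 'I_(Nbin n d) -> {ffun 'I_n -> nat})
  (He : is_ordering e) K (HK : forall k, (\sum_l e l k)%N = K) (s : 'S_n) :
  goodP e K (perm_mx s : 'M[R]_n).
Proof.
have [ts -> _] := prod_tpermP s.
elim: ts => [|t ts IH]; first by rewrite big_nil perm_mx1; exact: goodP_1.
by rewrite big_cons perm_mxM; apply: goodP_mul => //; apply: goodP_tperm.
Qed.

Lemma goodP_all (R : fieldType) n d (e : 'I_(Nbin n.+1 d) -> {ffun 'I_n.+1 -> nat})
  (He : is_ordering e) K (HK : forall k, (\sum_l e l k)%N = K) (P : 'M[R]_n.+1) :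
  goodP e K P.
Proof.
have HC := cormen_lup_correct P.
have Hp := cormen_lup_perm P.
have HL := cormen_lup_lower P.
have HU := cormen_lup_upper P.
move: HC Hp HL HU; case: (cormen_lup P) => [[Pm L] U] /= HC /is_perm_mxP [s Es] HL HU.
have -> : P = perm_mx s^-1 *m (L *m U).
  by rewrite !mulmxE -HC Es mulrA -!mulmxE -perm_mxM mulVg perm_mx1 mul1mx.
apply: goodP_mul; first exact: goodP_perm.
apply: goodP_mul.
  apply: (goodP_tri He HK (w := fun k => nat_of_ord k)) => a b ab.
  case: (ltnP b a) => // ba; rewrite HL // (negPf ab) //.
  by rewrite eqxx.
apply: (goodP_tri He HK (w := fun k => (n.+1 - k)%N)) => a b ab.
case: (ltnP b a) => [ba|ab']; first by rewrite HU // eqxx.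
move=> _; have : (a < b)%N by rewrite ltn_neqAle ab'; move: ab; rewrite -val_eqE => ->.
by move=> h; have := ltn_ord b; lia.
Qed.

Lemma mxvec_index_eq m n (i i' : 'I_m) (k k' : 'I_n) :
  (mxvec_index i k == mxvec_index i' k') = (i == i') && (k == k').
Proof.
apply/eqP/andP => [|[/eqP -> /eqP ->] //].
by rewrite /mxvec_index => /cast_ord_inj /enum_rank_inj [-> ->].
Qed.

Lemma part1a (R : comNzRingType) n d (e : 'I_(Nbin n d) -> {ffun 'I_n -> nat})
  (A : 'I_(Nbin n d) -> 'rV[R]_n) :
  (\det (Vdm_gen R e)).@[coords A] = \det (Vdm e A).
Proof.
rewrite -det_map_mx; congr (\det _); apply/matrixP => i l.
rewrite !mxE rmorph_prod; apply: eq_bigr => k _.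
by rewrite rmorphXn /= mevalXU /coords mxvecE mxE.
Qed.

Lemma part1b (R : comNzRingType) n d (e : 'I_(Nbin n d) -> {ffun 'I_n -> nat})
  (He : is_ordering e) (p : 'I_n) :
  homog_in_coord p (Nbin_pred n.+1 d) (\det (Vdm_gen R e)).
Proof.
move=> m; rewrite /determinant => /msupp_sum_le /flattenP [sq /mapP [s _ ->] Hm].
pose mu := (\sum_i \sum_k (U_(mxvec_index i k) *+ e (s i) k))%MM.
have Hprod : \prod_i (Vdm_gen R e) i (s i) = 'X_[mu].
  rewrite /mu (big_morph (fun m => 'X_[m] : {mpoly R[_]}) (@mpolyXD _ _) (@mpolyX0 _ _)); apply: eq_bigr => i _.
  by rewrite mxE mprodXnE.
have Em : m = mu.
  move: Hm; rewrite Hprod; case: odd_perm; rewrite ?expr1 ?expr0 ?mulN1r ?mul1r.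
    by rewrite (perm_mem (msuppN _)) msuppX inE => /eqP.
  by rewrite msuppX inE => /eqP.
rewrite Em -(sum_e_p He p) [RHS](reindex_inj (@perm_inj _ s)) /=.
apply: eq_bigr => i _; rewrite /mu mnm_sumE (bigD1 i) //= [X in (_ + X)%N]big1 ?addn0.
  rewrite mnm_sumE (bigD1 p) //= mulmnE mnm1E eqxx mul1n big1 ?addn0 //.
  by move=> k kp; rewrite mulmnE mnm1E mxvec_index_eq eqxx (negPf kp).
move=> i' ii'; rewrite mnm_sumE big1 // => k _.
by rewrite mulmnE mnm1E mxvec_index_eq (negPf ii').
Qed.

Theorem proposition2p3 (R : realType) (n d : nat)
  (e : 'I_(Nbin n d) -> {ffun 'I_n -> nat})
  (A : 'I_(Nbin n d) -> 'rV[R]_n) :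
  (0 < n)%N -> is_ordering e -> injective A ->
  [/\ (* (1) evaluation of the generic determinant at A is Det V(A), and it is
         homogeneous of degree N(n+1,d-1) in each coordinate block *)
      (\det (Vdm_gen R e)).@[coords A]
        = \det (Vdm e A)
      /\ (forall p : 'I_n, homog_in_coord p (Nbin_pred n.+1 d) (\det (Vdm_gen R e))),
      (* (2) *)
      (forall P : 'M[R]_n,
         \det (Vdm e (fun i => (P *m (A i)^T)^T))
           = (\det P) ^+ (Nbin_pred n.+1 d) * \det (Vdm e A)) &
      (* (3) *)
      (forall v : 'rV[R]_n, \det (Vdm e (fun i => A i - v)) = \det (Vdm e A))].
Proof.
move=> hn He HA.
have HK := sum_e_p He.
split; [split| |].
- exact: part1a.
- by move=> p; apply: part1b.
- move=> P; destruct n as [|n']; first by [].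
  exact: (goodP_all He HK P A).
- by move=> v; apply: part3.
Qed.
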